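(* Let $E$ and $F$ be disjoint finite sets, and let $S\subseteq 2^E$ and $T\subseteq 2^F$ be powerful sets. Define the direct sum $S\oplus T=\{X\cup Y : X\in S,\ Y\in T\}\subseteq 2^{E\cup F}$. Then $\mathcal{C}(S\oplus T)=\mathcal{C}(S)\cup\mathcal{C}(T)$.
   Context: For a finite set $E$, a set $S\subseteq 2^E$ is powerful if for every $X\subseteq E$ the number of members of $S$ that are subsets of $X$ is a power of $2$ (in particular $\emptyset\in S$). For a powerful set $S$, $\mathcal{C}(S)$ denotes the set of cocircuits of $S$, i.e. the minimal (under inclusion) nonempty members of $S$. *)

(* Defs.v *)
From mathcomp Require Import all_boot.
Set Implicit Arguments. Unset Strict Implicit. Unset Printing Implicit Defensive.

(* Subsets of a ground finite set E are modelled as sets over an ambient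
   finType U contained in E; a family S \subseteq 2^E is a {set {set U}}
   all of whose members are subsets of E. *)

Definition family_on (U : finType) (E : {set U}) (S : {set {set U}}) : bool :=
  S \subset powerset E.

Definition powerful (U : finType) (E : {set U}) (S : {set {set U}}) : Prop :=
  family_on E S /\
  forall X : {set U}, X \subset E ->
    exists k : nat, #|[set Y in S | Y \subset X]| = 2 ^ k.

Definition cocircuits (U : finType) (S : {set {set U}}) : {set {set U}} :=
  [set C in S | (C != set0) &&
     [forall D in S, (D != set0) && (D \subset C) ==> (D == C)]].

Definition dsum (U : finType) (S T : {set {set U}}) : {set {set U}} :=
  [set X :|: Y | X in S, Y in T].

(* Main.v *)
Require Import Defs.
From mathcomp Require Import all_boot.
Set Implicit Arguments. Unset Strict Implicit.

Section Aux.
Variable U : finType.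
Implicit Types (E F C D X Y : {set U}) (S T : {set {set U}}).

Lemma powerful0 E S : powerful E S -> set0 \in S.
Proof.
case=> _ /(_ set0 (sub0set _)) [k Hk].
apply/negPn/negP => H0.
suff : #|[set Y in S | Y \subset set0]| = 0 by rewrite Hk; move/eqP; rewrite expn_eq0.
apply/eqP; rewrite cards_eq0; apply/eqP/setP => Y; rewrite !inE.
apply/negbTE/negP => /andP [HY]; rewrite subset0 => /eqP HY0.
by rewrite HY0 in HY; rewrite HY in H0.
Qed.

Lemma powerful_sub E S Y : powerful E S -> Y \in S -> Y \subset E.
Proof. by case=> /subsetP H _ /H; rewrite powersetE. Qed.

Lemma cocP C S : reflect (C \in S /\ C != set0 /\
   forall D, D \in S -> D != set0 -> D \subset C -> D = C) (C \in cocircuits S).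
Proof.
rewrite /cocircuits inE; apply: (iffP idP).
  case/and3P => H1 H2 /forallP H3; do 2!split => //.
  by move=> D HD HD0 HDC; move: (H3 D); rewrite HD HD0 HDC /= => /eqP.
case=> H1 [H2 H3]; rewrite H1 H2 /=; apply/forallP => D.
apply/implyP => HD; apply/implyP => /andP [HD0 HDC].
by rewrite (H3 D HD HD0 HDC).
Qed.

Lemma dsumC S T : dsum S T = dsum T S.
Proof.
apply/setP => Z; apply/imset2P/imset2P => -[X Y hX hY ->]; exists Y X => //;
by rewrite setUC.
Qed.

Lemma dsum_mem S T X Y : X \in S -> Y \in T -> X :|: Y \in dsum S T.
Proof. by move=> hX hY; apply/imset2P; exists X Y. Qed.

Lemma dir1 E F S T C : [disjoint E & F] -> powerful E S -> powerful F T ->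
  C \in cocircuits S -> C \in cocircuits (dsum S T).
Proof.
move=> dEF pS pT /cocP [H1 [H2 H3]]; apply/cocP; split.
  by rewrite -[C]setU0; apply: dsum_mem => //; apply: powerful0 pT.
split => // D /imset2P [X Y hX hY ->] HD0 HDC.
have CE : C \subset E by apply: powerful_sub pS H1.
have YF : Y \subset F by apply: powerful_sub pT hY.
have Y0 : Y = set0.
  apply/eqP; rewrite -subset0.
  have YC : Y \subset C by apply: subset_trans (subsetUr X Y) HDC.
  have YE : Y \subset E := subset_trans YC CE.
  apply/subsetP => y hy.
  by move: (disjointFr dEF (subsetP YE _ hy)); rewrite (subsetP YF _ hy).
move: HD0 HDC; rewrite Y0 setU0 => HD0 HDC; exact: H3.
Qed.

Lemma dir2 S T C : set0 \in S -> set0 \in T ->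
  C \in cocircuits (dsum S T) -> (C \in cocircuits S) || (C \in cocircuits T).
Proof.
move=> S0 T0 /cocP [/imset2P [X Y hX hY HC] [H2 H3]].
have sub : S \subset dsum S T.
  by apply/subsetP => Z hZ; rewrite -[Z]setU0; apply: dsum_mem.
have subT : T \subset dsum S T.
  by apply/subsetP => Z hZ; rewrite -[Z]set0U; apply: dsum_mem.
have minS : forall Z, Z \in S -> Z = C -> C \in cocircuits S.
  move=> Z hZ HZ; apply/cocP; rewrite -HZ; split => //; split; first by rewrite HZ.
  move=> D hD HD0 HDZ; rewrite HZ; apply: H3 => //; last by rewrite -HZ.
  exact: (subsetP sub).
have minT : forall Z, Z \in T -> Z = C -> C \in cocircuits T.
  move=> Z hZ HZ; apply/cocP; rewrite -HZ; split => //; split; first by rewrite HZ.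
  move=> D hD HD0 HDZ; rewrite HZ; apply: H3 => //; last by rewrite -HZ.
  exact: (subsetP subT).
have [X0|X0] := eqVneq X set0.
  by apply/orP; right; apply: (minT Y) => //; rewrite HC X0 set0U.
apply/orP; left; apply: (minS X) => //; apply: H3 => //.
  exact: (subsetP sub).
by rewrite HC subsetUl.
Qed.

End Aux.

Theorem theorem2 (U : finType) (E F : {set U}) (S T : {set {set U}}) :
  [disjoint E & F] ->
  powerful E S -> powerful F T ->
  cocircuits (dsum S T) = cocircuits S :|: cocircuits T.
Proof.
move=> dEF pS pT; apply/setP => C; rewrite in_setU; apply/idP/idP.
  move=> H. exact: (dir2 (powerful0 pS) (powerful0 pT) H).
case/orP => H; first exact: dir1 dEF pS pT H.
rewrite dsumC; apply: dir1 _ pT pS H; by rewrite disjoint_sym.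
Qed.
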